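(* Let $A=\begin{bmatrix} 0 & J_{k_1,k_2} & X_1\\ J_{k_1,k_2} & 0 & X_2\\ X_3 & X_4 & Y\end{bmatrix}$ and $B=\begin{bmatrix} J_{k_1,k_2} & 0 & X_1\\ 0 & J_{k_1,k_2} & X_2\\ X_3 & X_4 & Y\end{bmatrix}$ be Gram mates, where $k_1,k_2>0$, $\mathbf{1}^TX_1=\mathbf{1}^TX_2$ and $X_3\mathbf{1}=X_4\mathbf{1}$. Let $R$ and $S$ be the row and column sum vectors of $A$, and conformally partitioned with the rows and the columns of $A$ as $R=(R_1,R_2,R_3)$ and $S=(S_1,S_2,S_3)$, respectively. Suppose that for $i=1,2$, the set of all entries of $R_i$ (resp. $S_i$) does not have any element in common with that of $R_3$ (resp. $S_3$). Then, $A$ is isomorphic to $B$ if and only if the remaining matrix $Y$ is fixable.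
   Context: $J_{p,q}$ is the $p\times q$ all-ones matrix. Two $(0,1)$ matrices $A\neq B$ are Gram mates if $AA^T=BB^T$ and $A^TA=B^TB$; isomorphic if $B=PAQ$ for permutation matrices $P,Q$. For $(0,1)$ matrices $Z_1,Z_2$ of equal size, $\mathcal R_{Z_1,Z_2}$ is the set of triples $(P_1,P_2,Q)$ of permutation matrices with $Z_2=P_1Z_1Q$ and $Z_1=P_2Z_2Q$, and $\mathcal L_{Z_1,Z_2}$ is the set of triples $(P,Q_1,Q_2)$ of permutation matrices with $Z_1=PZ_1Q_1$ and $Z_2=PZ_2Q_2$. $Y$ is fixable if there exist permutation matrices $P,Q$ with $Y=PYQ$ such that either (i) $(P_1,P_2,Q)\in\mathcal R_{X_1,X_2}$ and $(P,Q_3,Q_4)\in\mathcal L_{X_3,X_4}$ for some $P_1,P_2,Q_3,Q_4$, or (ii) $(Q_3,Q_4,P^T)\in\mathcal R_{X_3^T,X_4^T}$ and $(Q^T,P_1,P_2)\in\mathcal L_{X_1^T,X_2^T}$ for some $P_1,P_2,Q_3,Q_4$. *)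

(* Defs.v *)
From HB Require Import structures.
From mathcomp Require Import all_boot all_order all_algebra all_fingroup.
Set Implicit Arguments. Unset Strict Implicit. Unset Printing Implicit Defensive.
Import GRing.Theory Num.Theory.
Local Open Scope ring_scope.

(* (0,1) matrices are represented as integer matrices with entries in {0,1}. *)
Definition is01 p q (A : 'M[int]_(p, q)) : Prop :=
  forall i j, A i j = 0 \/ A i j = 1.

Definition Jmx p q : 'M[int]_(p, q) := const_mx 1.

Definition gram_mates p q (A B : 'M[int]_(p, q)) : Prop :=
  [/\ is01 A, is01 B, A <> B, A *m A^T = B *m B^T & A^T *m A = B^T *m B].

Definition mx_isomorphic p q (A B : 'M[int]_(p, q)) : Prop :=
  exists (P : 'M[int]_p) (Q : 'M[int]_q),
    [/\ is_perm_mx P, is_perm_mx Q & B = P *m A *m Q].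

Definition inR p q (Z1 Z2 : 'M[int]_(p, q)) (P1 P2 : 'M[int]_p) (Q : 'M[int]_q)
  : Prop :=
  [/\ is_perm_mx P1, is_perm_mx P2, is_perm_mx Q,
      Z2 = P1 *m Z1 *m Q & Z1 = P2 *m Z2 *m Q].

Definition inL p q (Z1 Z2 : 'M[int]_(p, q)) (P : 'M[int]_p) (Q1 Q2 : 'M[int]_q)
  : Prop :=
  [/\ is_perm_mx P, is_perm_mx Q1, is_perm_mx Q2,
      Z1 = P *m Z1 *m Q1 & Z2 = P *m Z2 *m Q2].

Definition fixable k1 k2 m n (X1 X2 : 'M[int]_(k1, n)) (X3 X4 : 'M[int]_(m, k2))
  (Y : 'M[int]_(m, n)) : Prop :=
  exists (P : 'M[int]_m) (Q : 'M[int]_n),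
    [/\ is_perm_mx P, is_perm_mx Q, Y = P *m Y *m Q &
      (exists P1 P2 Q3 Q4, inR X1 X2 P1 P2 Q /\ inL X3 X4 P Q3 Q4) \/
      (exists P1 P2 Q3 Q4, inR X3^T X4^T Q3 Q4 P^T /\ inL X1^T X2^T Q^T P1 P2)].

Definition matA k1 k2 m n (X1 X2 : 'M[int]_(k1, n)) (X3 X4 : 'M[int]_(m, k2))
  (Y : 'M[int]_(m, n)) : 'M[int]_((k1 + k1) + m, (k2 + k2) + n) :=
  block_mx (block_mx 0 (Jmx k1 k2) (Jmx k1 k2) 0) (col_mx X1 X2)
           (row_mx X3 X4) Y.

Definition matB k1 k2 m n (X1 X2 : 'M[int]_(k1, n)) (X3 X4 : 'M[int]_(m, k2))
  (Y : 'M[int]_(m, n)) : 'M[int]_((k1 + k1) + m, (k2 + k2) + n) :=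
  block_mx (block_mx (Jmx k1 k2) 0 0 (Jmx k1 k2)) (col_mx X1 X2)
           (row_mx X3 X4) Y.

Definition rsum p q (A : 'M[int]_(p, q)) (i : 'I_p) : int := \sum_j A i j.
Definition csum p q (A : 'M[int]_(p, q)) (j : 'I_q) : int := \sum_i A i j.

(* Main.v *)
Require Import Defs.
From mathcomp Require Import all_boot all_order all_algebra all_fingroup.
Import GRing.Theory Num.Theory.
Local Open Scope ring_scope.
Set Implicit Arguments. Unset Strict Implicit.

Definition iL k m (i : 'I_k) : 'I_((k+k)+m) := lshift m (lshift k i).
Definition iR k m (i : 'I_k) : 'I_((k+k)+m) := lshift m (rshift k i).
Definition iB k m (l : 'I_m) : 'I_((k+k)+m) := rshift (k+k) l.

Variant idx3_spec k m : 'I_((k+k)+m) -> Type :=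
 | I3L i : idx3_spec (iL m i)
 | I3R i : idx3_spec (iR m i)
 | I3B l : idx3_spec (iB k l).

Lemma idx3P k m (x : 'I_((k+k)+m)) : idx3_spec x.
Proof.
rewrite -(splitK x); case: (split x) => [y|l] /=; last exact: I3B.
rewrite -(splitK y); case: (split y) => [i|i] /=; [exact: I3L | exact: I3R].
Qed.

Lemma pmxE p q (s : 'S_p) (t : 'S_q) (M : 'M[int]_(p,q)) i j :
  (perm_mx s *m M *m perm_mx t) i j = M (s i) (t^-1%g j).
Proof. by rewrite -row_permE -{1}[t]invgK -col_permE !mxE. Qed.

Lemma restrict a N (s : 'S_N) (e1 e2 : 'I_a -> 'I_N) :
  injective e1 -> injective e2 -> (forall x, exists y, s (e1 x) = e2 y) ->
  exists r : 'S_a, forall x, s (e1 x) = e2 (r x).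
Proof.
move=> i1 i2 h; have [f hf] := fin_all_exists h.
have finj : injective f.
  by move=> x y e; apply: i1; apply: (@perm_inj _ s); rewrite hf e -hf.
by exists (perm finj) => x; rewrite permE.
Qed.

Ltac simplAB := rewrite /matA /matB /iL /iR /iB
  ?(block_mxEul,block_mxEur,block_mxEdl,block_mxEdr,col_mxEu,col_mxEd,row_mxEl,row_mxEr) /Jmx ?mxE.

Lemma iL_inj k m : injective (@iL k m).
Proof. by move=> x y /lshift_inj/lshift_inj. Qed.
Lemma iR_inj k m : injective (@iR k m).
Proof. by move=> x y /lshift_inj/rshift_inj. Qed.
Lemma iB_inj k m : injective (@iB k m).
Proof. by move=> x y /rshift_inj. Qed.

Lemma rsumAB k1 k2 m n (X1 X2 : 'M[int]_(k1, n)) (X3 X4 : 'M[int]_(m, k2)) (Y : 'M[int]_(m, n)) x :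
  rsum (matA X1 X2 X3 X4 Y) x = rsum (matB X1 X2 X3 X4 Y) x.
Proof.
rewrite /rsum !big_split_ord /=; case: (idx3P x) => [i|i|l].
- rewrite [X in _ = X + _]addrC; congr (_ + _ + _); apply: eq_bigr => j _; simplAB; done.
- rewrite [X in _ = X + _]addrC; congr (_ + _ + _); apply: eq_bigr => j _; simplAB; done.
- congr (_ + _ + _); apply: eq_bigr => j _; simplAB; done.
Qed.
Lemma csumAB k1 k2 m n (X1 X2 : 'M[int]_(k1, n)) (X3 X4 : 'M[int]_(m, k2)) (Y : 'M[int]_(m, n)) x :
  csum (matA X1 X2 X3 X4 Y) x = csum (matB X1 X2 X3 X4 Y) x.
Proof.
rewrite /csum !big_split_ord /=; case: (idx3P x) => [i|i|l].
- rewrite [X in _ = X + _]addrC; congr (_ + _ + _); apply: eq_bigr => j _; simplAB; done.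
- rewrite [X in _ = X + _]addrC; congr (_ + _ + _); apply: eq_bigr => j _; simplAB; done.
- congr (_ + _ + _); apply: eq_bigr => j _; simplAB; done.
Qed.

Lemma split_l m n (i : 'I_m) : split (lshift n i) = inl i.
Proof. exact: (unsplitK (inl _ i)). Qed.
Lemma split_r m n (i : 'I_n) : split (rshift m i) = inr i.
Proof. exact: (unsplitK (inr _ i)). Qed.

Definition gl3 k m (sw : bool) (a b : 'I_k -> 'I_k) (p : 'I_m -> 'I_m)
  (x : 'I_((k+k)+m)) : 'I_((k+k)+m) :=
  match split x with
  | inl y => match split y with
             | inl i => if sw then iR m (a i) else iL m (a i)
             | inr i => if sw then iL m (b i) else iR m (b i) end
  | inr l => iB k (p l) end.

Lemma gl3L k m sw a b p i : @gl3 k m sw a b p (iL m i) = if sw then iR m (a i) else iL m (a i).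
Proof. by rewrite /gl3 /iL !split_l. Qed.
Lemma gl3R k m sw a b p i : @gl3 k m sw a b p (iR m i) = if sw then iL m (b i) else iR m (b i).
Proof. by rewrite /gl3 /iR split_l split_r. Qed.
Lemma gl3B k m sw a b p l : @gl3 k m sw a b p (iB k l) = iB k (p l).
Proof. by rewrite /gl3 /iB split_r. Qed.
Definition gl3E := (gl3L, gl3R, gl3B).

Lemma gl3_inj k m sw a b p : injective a -> injective b -> injective p ->
  injective (@gl3 k m sw a b p).
Proof.
move=> ai bi pi x y; case: (idx3P x) => [i|i|l]; case: (idx3P y) => [j|j|l'];
rewrite !gl3E; case: sw => /eqP; rewrite /iL /iR /iB ?eq_shift // => /eqP;
by [move/ai -> | move/bi -> | move/pi ->].
Qed.

Lemma iso_of k1 k2 m n (X1 X2 : 'M[int]_(k1, n)) (X3 X4 : 'M[int]_(m, k2)) (Y : 'M[int]_(m, n))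
  swr swc (a b : 'S_k1) (p : 'S_m) (c d : 'S_k2) (q : 'S_n) :
  (forall x w, matB X1 X2 X3 X4 Y x w =
      matA X1 X2 X3 X4 Y (gl3 swr a b p x) (gl3 swc c d q w)) ->
  mx_isomorphic (matA X1 X2 X3 X4 Y) (matB X1 X2 X3 X4 Y).
Proof.
move=> h.
have si := gl3_inj (m:=m) (sw:=swr) (@perm_inj _ a) (@perm_inj _ b) (@perm_inj _ p).
have ui := gl3_inj (m:=n) (sw:=swc) (@perm_inj _ c) (@perm_inj _ d) (@perm_inj _ q).
exists (perm_mx (perm si)), (perm_mx (perm ui)^-1); split; try exact: perm_mx_is_perm.
by apply/matrixP => x w; rewrite pmxE invgK !permE h.
Qed.

Lemma easy k1 k2 m n (X1 X2 : 'M[int]_(k1, n)) (X3 X4 : 'M[int]_(m, k2)) (Y : 'M[int]_(m, n)) :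
  fixable X1 X2 X3 X4 Y -> mx_isomorphic (matA X1 X2 X3 X4 Y) (matB X1 X2 X3 X4 Y).
Proof.
move=> [P [Q [hP hQ eY [[P1 [P2 [Q3 [Q4 [[h1 h2 _ e2 e1] [_ h3 h4 e3 e4]]]]]]
                        |[P1 [P2 [Q3 [Q4 [[h3 h4 _ e4 e3] [_ h1 h2 e1 e2]]]]]]]]]].
- case/is_perm_mxP: hP => p eP; subst P.
  case/is_perm_mxP: hQ => q eQ; subst Q.
  case/is_perm_mxP: h1 => b1 eP1; subst P1.
  case/is_perm_mxP: h2 => b2 eP2; subst P2.
  case/is_perm_mxP: h3 => c3 eQ3; subst Q3.
  case/is_perm_mxP: h4 => c4 eQ4; subst Q4.
  have E1 i j : X1 i j = X2 (b2 i) (q^-1%g j) by rewrite {1}e1 pmxE.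
  have E2 i j : X2 i j = X1 (b1 i) (q^-1%g j) by rewrite {1}e2 pmxE.
  have E3 i j : X3 i j = X3 (p i) (c3^-1%g j) by rewrite {1}e3 pmxE.
  have E4 i j : X4 i j = X4 (p i) (c4^-1%g j) by rewrite {1}e4 pmxE.
  have EY i j : Y i j = Y (p i) (q^-1%g j) by rewrite {1}eY pmxE.
  apply: (@iso_of _ _ _ _ _ _ _ _ _ true false b2 b1 p c3^-1 c4^-1 q^-1) => x w.
  case: (idx3P x) => [i|i|l]; case: (idx3P w) => [z|z|j]; rewrite !gl3E /=; simplAB;
  first [done | by rewrite E1 | by rewrite E2 | by rewrite E3 | by rewrite E4 | by rewrite EY].
- case/is_perm_mxP: hP => p eP; subst P.
  case/is_perm_mxP: hQ => q eQ; subst Q.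
  case/is_perm_mxP: h1 => d1 eP1; subst P1.
  case/is_perm_mxP: h2 => d2 eP2; subst P2.
  case/is_perm_mxP: h3 => c3 eQ3; subst Q3.
  case/is_perm_mxP: h4 => c4 eQ4; subst Q4.
  have E1 i j : X1 i j = X1 (d1^-1%g i) (q^-1%g j).
    by move/matrixP/(_ j i): e1; rewrite tr_perm_mx pmxE !mxE.
  have E2 i j : X2 i j = X2 (d2^-1%g i) (q^-1%g j).
    by move/matrixP/(_ j i): e2; rewrite tr_perm_mx pmxE !mxE.
  have E3 i j : X3 i j = X4 (p i) (c4 j).
    by move/matrixP/(_ j i): e3; rewrite tr_perm_mx pmxE !mxE invgK.
  have E4 i j : X4 i j = X3 (p i) (c3 j).
    by move/matrixP/(_ j i): e4; rewrite tr_perm_mx pmxE !mxE invgK.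
  have EY i j : Y i j = Y (p i) (q^-1%g j) by rewrite {1}eY pmxE.
  apply: (@iso_of _ _ _ _ _ _ _ _ _ false true d1^-1 d2^-1 p c4 c3 q^-1) => x w.
  case: (idx3P x) => [i|i|l]; case: (idx3P w) => [z|z|j]; rewrite !gl3E /=; simplAB;
  first [done | by rewrite E1 | by rewrite E2 | by rewrite E3 | by rewrite E4 | by rewrite EY].
Qed.

Lemma hard k1 k2 m n (X1 X2 : 'M[int]_(k1, n)) (X3 X4 : 'M[int]_(m, k2)) (Y : 'M[int]_(m, n))
  (s : 'S_((k1+k1)+m)) (u : 'S_((k2+k2)+n)) :
  (0 < k1)%N -> (0 < k2)%N ->
  (forall (i : 'I_k1) (l : 'I_m),
     rsum (matA X1 X2 X3 X4 Y) (iL m i) != rsum (matA X1 X2 X3 X4 Y) (iB k1 l)) ->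
  (forall (i : 'I_k1) (l : 'I_m),
     rsum (matA X1 X2 X3 X4 Y) (iR m i) != rsum (matA X1 X2 X3 X4 Y) (iB k1 l)) ->
  (forall (j : 'I_k2) (l : 'I_n),
     csum (matA X1 X2 X3 X4 Y) (iL n j) != csum (matA X1 X2 X3 X4 Y) (iB k2 l)) ->
  (forall (j : 'I_k2) (l : 'I_n),
     csum (matA X1 X2 X3 X4 Y) (iR n j) != csum (matA X1 X2 X3 X4 Y) (iB k2 l)) ->
  (forall x w, matB X1 X2 X3 X4 Y x w = matA X1 X2 X3 X4 Y (s x) (u w)) ->
  fixable X1 X2 X3 X4 Y.
Proof.
move=> k1p k2p H1 H2 H3 H4 hB.
have hr x : rsum (matA X1 X2 X3 X4 Y) (s x) = rsum (matA X1 X2 X3 X4 Y) x.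
  rewrite [RHS]rsumAB /rsum (reindex_inj (@perm_inj _ u)).
  by apply: eq_bigr => w _; rewrite hB.
have hc w : csum (matA X1 X2 X3 X4 Y) (u w) = csum (matA X1 X2 X3 X4 Y) w.
  rewrite [RHS]csumAB /csum (reindex_inj (@perm_inj _ s)).
  by apply: eq_bigr => x _; rewrite hB.
have sB l : exists l', s (iB k1 l) = iB k1 l'.
  move: (hr (iB k1 l)); case: (idx3P (s (iB k1 l))) => [i|i|l'] h; last by exists l'.
  - by case/negP: (H1 i l); rewrite h.
  - by case/negP: (H2 i l); rewrite h.
have sLR i : (exists i', s (iL m i) = iL m i') \/ (exists i', s (iL m i) = iR m i').
  move: (hr (iL m i)); case: (idx3P (s (iL m i))) => [i'|i'|l] h.
  - by left; exists i'.
  - by right; exists i'.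
  - by case/negP: (H1 i l); rewrite -h.
have sRL i : (exists i', s (iR m i) = iL m i') \/ (exists i', s (iR m i) = iR m i').
  move: (hr (iR m i)); case: (idx3P (s (iR m i))) => [i'|i'|l] h.
  - by left; exists i'.
  - by right; exists i'.
  - by case/negP: (H2 i l); rewrite -h.
have uB l : exists l', u (iB k2 l) = iB k2 l'.
  move: (hc (iB k2 l)); case: (idx3P (u (iB k2 l))) => [i|i|l'] h; last by exists l'.
  - by case/negP: (H3 i l); rewrite h.
  - by case/negP: (H4 i l); rewrite h.
have uLR i : (exists i', u (iL n i) = iL n i') \/ (exists i', u (iL n i) = iR n i').
  move: (hc (iL n i)); case: (idx3P (u (iL n i))) => [i'|i'|l] h.
  - by left; exists i'.
  - by right; exists i'.
  - by case/negP: (H3 i l); rewrite -h.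
have uRL i : (exists i', u (iR n i) = iL n i') \/ (exists i', u (iR n i) = iR n i').
  move: (hc (iR n i)); case: (idx3P (u (iR n i))) => [i'|i'|l] h.
  - by left; exists i'.
  - by right; exists i'.
  - by case/negP: (H4 i l); rewrite -h.
have [p hp] := restrict (@iB_inj _ _) (@iB_inj _ _) sB.
have [q hq] := restrict (@iB_inj _ _) (@iB_inj _ _) uB.
pose i0 : 'I_k1 := Ordinal k1p.
pose z0 : 'I_k2 := Ordinal k2p.
have EY l j : Y l j = Y (p l) (q j).
  by move: (hB (iB k1 l) (iB k2 j)); rewrite hp hq; simplAB.
exists (perm_mx p), (perm_mx q^-1); split; try exact: perm_mx_is_perm.
  by apply/matrixP => l j; rewrite pmxE invgK.
case: (sLR i0) => [[a0 h0]|[a0 h0]].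
- have uL z : exists z', u (iL n z) = iR n z'.
    case: (uLR z) => [[z' e]|//].
    by move: (hB (iL m i0) (iL n z)); rewrite h0 e; simplAB.
  have uR z : exists z', u (iR n z) = iL n z'.
    case: (uRL z) => [//|[z' e]].
    by move: (hB (iL m i0) (iR n z)); rewrite h0 e; simplAB.
  have [c3 hc3] := restrict (@iL_inj _ _) (@iR_inj _ _) uL.
  have [c4 hc4] := restrict (@iR_inj _ _) (@iL_inj _ _) uR.
  have sL i : exists i', s (iL m i) = iL m i'.
    case: (sLR i) => [//|[i' e]].
    by move: (hB (iL m i) (iL n z0)); rewrite e hc3; simplAB.
  have sR i : exists i', s (iR m i) = iR m i'.
    case: (sRL i) => [[i' e]|//].
    by move: (hB (iR m i) (iL n z0)); rewrite e hc3; simplAB.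
  have [a ha] := restrict (@iL_inj _ _) (@iL_inj _ _) sL.
  have [b hb] := restrict (@iR_inj _ _) (@iR_inj _ _) sR.
  right; exists (perm_mx a^-1), (perm_mx b^-1), (perm_mx c4), (perm_mx c3).
  split; split; try exact: perm_mx_is_perm; try by rewrite is_perm_mx_tr perm_mx_is_perm.
  + apply/matrixP => z l; rewrite tr_perm_mx pmxE !mxE invgK.
    by move: (hB (iB k1 l) (iR n z)); rewrite hp hc4; simplAB.
  + apply/matrixP => z l; rewrite tr_perm_mx pmxE !mxE invgK.
    by move: (hB (iB k1 l) (iL n z)); rewrite hp hc3; simplAB.
  + apply/matrixP => j i; rewrite tr_perm_mx invgK pmxE !mxE invgK.
    by move: (hB (iL m i) (iB k2 j)); rewrite ha hq; simplAB.
  + apply/matrixP => j i; rewrite tr_perm_mx invgK pmxE !mxE invgK.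
    by move: (hB (iR m i) (iB k2 j)); rewrite hb hq; simplAB.
- have uL z : exists z', u (iL n z) = iL n z'.
    case: (uLR z) => [//|[z' e]].
    by move: (hB (iL m i0) (iL n z)); rewrite h0 e; simplAB.
  have uR z : exists z', u (iR n z) = iR n z'.
    case: (uRL z) => [[z' e]|//].
    by move: (hB (iL m i0) (iR n z)); rewrite h0 e; simplAB.
  have [c3 hc3] := restrict (@iL_inj _ _) (@iL_inj _ _) uL.
  have [c4 hc4] := restrict (@iR_inj _ _) (@iR_inj _ _) uR.
  have sL i : exists i', s (iL m i) = iR m i'.
    case: (sLR i) => [[i' e]|//].
    by move: (hB (iL m i) (iL n z0)); rewrite e hc3; simplAB.
  have sR i : exists i', s (iR m i) = iL m i'.
    case: (sRL i) => [//|[i' e]].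
    by move: (hB (iR m i) (iL n z0)); rewrite e hc3; simplAB.
  have [a ha] := restrict (@iL_inj _ _) (@iR_inj _ _) sL.
  have [b hb] := restrict (@iR_inj _ _) (@iL_inj _ _) sR.
  left; exists (perm_mx b), (perm_mx a), (perm_mx c3^-1), (perm_mx c4^-1).
  split; split; try exact: perm_mx_is_perm.
  + apply/matrixP => i j; rewrite pmxE invgK.
    by move: (hB (iR m i) (iB k2 j)); rewrite hb hq; simplAB.
  + apply/matrixP => i j; rewrite pmxE invgK.
    by move: (hB (iL m i) (iB k2 j)); rewrite ha hq; simplAB.
  + apply/matrixP => l z; rewrite pmxE invgK.
    by move: (hB (iB k1 l) (iL n z)); rewrite hp hc3; simplAB.
  + apply/matrixP => l z; rewrite pmxE invgK.
    by move: (hB (iB k1 l) (iR n z)); rewrite hp hc4; simplAB.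
Qed.

Theorem proposition6p5 (k1 k2 m n : nat)
  (X1 X2 : 'M[int]_(k1, n)) (X3 X4 : 'M[int]_(m, k2)) (Y : 'M[int]_(m, n)) :
  (0 < k1)%N -> (0 < k2)%N ->
  gram_mates (matA X1 X2 X3 X4 Y) (matB X1 X2 X3 X4 Y) ->
  (forall j, csum X1 j = csum X2 j) ->
  (forall i, rsum X3 i = rsum X4 i) ->
  (* R_1, R_2 share no entry with R_3 *)
  (forall (i : 'I_k1) (l : 'I_m),
     rsum (matA X1 X2 X3 X4 Y) (lshift m (lshift k1 i))
       != rsum (matA X1 X2 X3 X4 Y) (rshift (k1 + k1) l)) ->
  (forall (i : 'I_k1) (l : 'I_m),
     rsum (matA X1 X2 X3 X4 Y) (lshift m (rshift k1 i))
       != rsum (matA X1 X2 X3 X4 Y) (rshift (k1 + k1) l)) ->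
  (* S_1, S_2 share no entry with S_3 *)
  (forall (j : 'I_k2) (l : 'I_n),
     csum (matA X1 X2 X3 X4 Y) (lshift n (lshift k2 j))
       != csum (matA X1 X2 X3 X4 Y) (rshift (k2 + k2) l)) ->
  (forall (j : 'I_k2) (l : 'I_n),
     csum (matA X1 X2 X3 X4 Y) (lshift n (rshift k2 j))
       != csum (matA X1 X2 X3 X4 Y) (rshift (k2 + k2) l)) ->
  (mx_isomorphic (matA X1 X2 X3 X4 Y) (matB X1 X2 X3 X4 Y)
   <-> fixable X1 X2 X3 X4 Y).
Proof.
move=> k1p k2p _ _ _ H1 H2 H3 H4; split; last exact: easy.
case=> [P [Q [hP hQ eB]]].
case/is_perm_mxP: hP => s eP; case/is_perm_mxP: hQ => t eQ; subst P Q.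
apply: (@hard _ _ _ _ _ _ _ _ _ s t^-1 k1p k2p H1 H2 H3 H4) => x w.
by rewrite eB pmxE.
Qed.
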